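(* Let $H$ be a strong symplectic Hilbert space with signature $(n_+,n_-)$ and let $W\subseteq H$ be a maximal positive-definite subspace. If $n_+<\infty$ or $n_-<\infty$, then $W$ is maximally completely positive-definite.
   Context: All Hilbert spaces are complex and separable. A strong symplectic structure on a Hilbert space $H$ is a continuous sesquilinear form $[\cdot,\cdot]$ (linear in the first, conjugate-linear in the second variable) with $[y,x]=-\overline{[x,y]}$, non-degenerate, and such that $x\mapsto[\cdot,x]$ maps $H$ onto its dual. For $L\subseteq H$, $L^{\perp_s}=\{x:[x,y]=0\ \forall y\in L\}$. A closed subspace $L\subseteq H$ is maximal positive-definite if $-i[x,x]>0$ for every $0\ne x\in L$ and $L$ is not properly contained in a subspace with the same property; it is maximally completely positive-definite if moreover there is $c_L>0$ with $-i[x,x]\ge c_L\|x\|^2$ for all $x\in L$. If $L$ is maximally completely positive-definite then $H=L\oplus L^{\perp_s}$ (topological direct sum), and the numbers $n_+=\dim L$, $n_-=\dim L^{\perp_s}$ do not depend on the choice of $L$; $(n_+,n_-)$ is the signature of $H$ (the signature of the Hermitian form $-i[\cdot,\cdot]$). *)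

(* Defs.v *)
From HB Require Import structures.
From mathcomp Require Import all_boot all_order all_algebra.
From mathcomp Require Import reals.
From mathcomp Require Import complex.
Set Implicit Arguments.
Unset Strict Implicit.
Unset Printing Implicit Defensive.
Import Order.TTheory GRing.Theory Num.Theory.
Local Open Scope ring_scope.

Definition iC {R : realType} : R[i] := Complex 0 1.
Definition RtoC {R : realType} (r : R) : R[i] := Complex r 0.
Definition cabs {R : realType} (z : R[i]) : R :=
  Num.sqrt (complex.Re z ^+ 2 + complex.Im z ^+ 2).

Definition is_inner_product {R : realType} {V : lmodType R[i]}
  (ip : V -> V -> R[i]) : Prop :=
  [/\ forall (a : R[i]) (x y z : V), ip (a *: x + y) z = a * ip x z + ip y z,
      forall x y : V, ip y x = Num.conj (ip x y)
    & forall x : V, x != 0 -> 0 < ip x x].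

Definition hnorm {R : realType} {V : lmodType R[i]}
  (ip : V -> V -> R[i]) (x : V) : R := Num.sqrt (complex.Re (ip x x)).

Definition hconverges {R : realType} {V : lmodType R[i]}
  (ip : V -> V -> R[i]) (u : nat -> V) (l : V) : Prop :=
  forall e : R, 0 < e -> exists N : nat, forall n : nat, (N <= n)%N ->
    hnorm ip (u n - l) < e.

Definition hcauchy {R : realType} {V : lmodType R[i]}
  (ip : V -> V -> R[i]) (u : nat -> V) : Prop :=
  forall e : R, 0 < e -> exists N : nat, forall m n : nat, (N <= m)%N -> (N <= n)%N ->
    hnorm ip (u m - u n) < e.

Definition is_hilbert {R : realType} {V : lmodType R[i]}
  (ip : V -> V -> R[i]) : Prop :=
  [/\ is_inner_product ip,
      (forall u : nat -> V, hcauchy ip u -> exists l : V, hconverges ip u l)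
    & (exists d : nat -> V, forall (x : V) (e : R), 0 < e ->
         exists n : nat, hnorm ip (x - d n) < e)].

Definition hcontinuous_fun {R : realType} {V : lmodType R[i]}
  (ip : V -> V -> R[i]) (f : V -> R[i]) : Prop :=
  forall (x : V) (e : R), 0 < e -> exists2 d : R, 0 < d &
    forall y : V, hnorm ip (y - x) < d -> cabs (f y - f x) < e.

Definition hcontinuous_form {R : realType} {V : lmodType R[i]}
  (ip : V -> V -> R[i]) (s : V -> V -> R[i]) : Prop :=
  forall (x y : V) (e : R), 0 < e -> exists2 d : R, 0 < d &
    forall x' y' : V, hnorm ip (x' - x) < d -> hnorm ip (y' - y) < d ->
      cabs (s x' y' - s x y) < e.

Definition clinear {R : realType} {V : lmodType R[i]} (f : V -> R[i]) : Prop :=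
  forall (a : R[i]) (x y : V), f (a *: x + y) = a * f x + f y.

Definition strong_symplectic {R : realType} {V : lmodType R[i]}
  (ip : V -> V -> R[i]) (s : V -> V -> R[i]) : Prop :=
  [/\ (forall (a : R[i]) (x y z : V), s (a *: x + y) z = a * s x z + s y z) /\
      (forall (a : R[i]) (x y z : V), s z (a *: x + y) = Num.conj a * s z x + s z y),
      forall x y : V, s y x = - Num.conj (s x y),
      hcontinuous_form ip s,
      forall x : V, (forall y : V, s x y = 0) -> x = 0
    & forall f : V -> R[i], clinear f -> hcontinuous_fun ip f ->
        exists x : V, forall y : V, f y = s y x].

Definition is_subspace {R : realType} {V : lmodType R[i]} (L : V -> Prop) : Prop :=
  L 0 /\ forall (a : R[i]) (x y : V), L x -> L y -> L (a *: x + y).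

Definition is_closed_subspace {R : realType} {V : lmodType R[i]}
  (ip : V -> V -> R[i]) (L : V -> Prop) : Prop :=
  is_subspace L /\
  forall (u : nat -> V) (l : V), (forall n, L (u n)) -> hconverges ip u l -> L l.

Definition sperp {R : realType} {V : lmodType R[i]}
  (s : V -> V -> R[i]) (L : V -> Prop) : V -> Prop :=
  fun x => forall y : V, L y -> s x y = 0.

Definition pos_def {R : realType} {V : lmodType R[i]}
  (s : V -> V -> R[i]) (L : V -> Prop) : Prop :=
  forall x : V, L x -> x != 0 -> 0 < - (iC * s x x).

Definition max_pos_def {R : realType} {V : lmodType R[i]}
  (ip : V -> V -> R[i]) (s : V -> V -> R[i]) (L : V -> Prop) : Prop :=
  [/\ is_closed_subspace ip L, pos_def s L
    & forall L' : V -> Prop, is_closed_subspace ip L' -> pos_def s L' ->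
        (forall x, L x -> L' x) -> forall x, L' x -> L x].

Definition max_compl_pos_def {R : realType} {V : lmodType R[i]}
  (ip : V -> V -> R[i]) (s : V -> V -> R[i]) (L : V -> Prop) : Prop :=
  max_pos_def ip s L /\
  exists2 c : R, 0 < c &
    forall x : V, L x -> RtoC (c * hnorm ip x ^+ 2) <= - (iC * s x x).

Definition finite_dim {R : realType} {V : lmodType R[i]} (L : V -> Prop) : Prop :=
  exists (n : nat) (v : 'I_n -> V), forall x : V, L x ->
    exists a : 'I_n -> R[i], x = \sum_(i < n) a i *: v i.

(* Main.v *)
Require Import Defs.
From HB Require Import structures.
From mathcomp Require Import all_boot all_order all_algebra.
From mathcomp Require Import reals.
From mathcomp Require Import complex.
From mathcomp Require Import ring lra.
From mathcomp Require boolp.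
Import Order.TTheory GRing.Theory Num.Theory.
Set Implicit Arguments.
Unset Strict Implicit.
Unset Printing Implicit Defensive.
Local Open Scope complex_scope.
Local Open Scope ring_scope.

Section Herm.
Variables (R : realType) (V : lmodType R[i]).

Definition herm (F : V -> V -> R[i]) :=
  (forall a x y z, F (a *: x + y) z = a * F x z + F y z) /\
  (forall x y, F y x = Num.conj (F x y)).

Definition nF (F : V -> V -> R[i]) x := complex.Re (F x x).

Variables (F : V -> V -> R[i]) (HF : herm F).

Lemma FDl x y z : F (x + y) z = F x z + F y z.
Proof. by rewrite -[x]scale1r HF.1 mul1r scale1r. Qed.

Lemma F0l z : F 0 z = 0.
Proof. by apply/eqP; rewrite -(addrI (F 0 z) (_ : F 0 z + F 0 z = F 0 z + 0)) // addr0 -FDl addr0. Qed.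

Lemma FZl a x z : F (a *: x) z = a * F x z.
Proof. by rewrite -[a *: x]addr0 HF.1 F0l addr0. Qed.

Lemma FNl x z : F (- x) z = - F x z.
Proof. by rewrite -scaleN1r FZl mulN1r. Qed.

Lemma FBl x y z : F (x - y) z = F x z - F y z.
Proof. by rewrite FDl FNl. Qed.

Lemma FDr x y z : F z (x + y) = F z x + F z y.
Proof. by rewrite [LHS]HF.2 [F z x]HF.2 [F z y]HF.2 FDl rmorphD. Qed.

Lemma FZr a x z : F z (a *: x) = Num.conj a * F z x.
Proof. by rewrite [LHS]HF.2 [F z x]HF.2 FZl rmorphM. Qed.

Lemma F0r z : F z 0 = 0.
Proof. by rewrite [LHS]HF.2 F0l rmorph0. Qed.

Lemma FNr x z : F z (- x) = - F z x.
Proof. by rewrite [LHS]HF.2 [F z x]HF.2 FNl rmorphN. Qed.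

Lemma FBr x y z : F z (x - y) = F z x - F z y.
Proof. by rewrite FDr FNr. Qed.

Lemma F_Im x : complex.Im (F x x) = 0.
Proof.
have := HF.2 x x; case: (F x x) => a b /(congr1 (@complex.Im R)) /= h.
lra.
Qed.

Lemma F_real x : F x x = (nF F x)%:C.
Proof. by rewrite /nF; move: (F_Im x); case: (F x x) => a b /= ->. Qed.

Lemma ReFC x y : complex.Re (F y x) = complex.Re (F x y).
Proof. by rewrite HF.2; case: (F x y). Qed.

Lemma nF0 : nF F 0 = 0.
Proof. by rewrite /nF F0l. Qed.

Lemma nF_add x y : nF F (x + y) = nF F x + nF F y + 2 * complex.Re (F x y).
Proof.
rewrite /nF FDl !FDr !raddfD /= ReFC; ring.
Qed.

Lemma nF_opp x : nF F (- x) = nF F x.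
Proof. by rewrite /nF FNl FNr opprK. Qed.

Lemma nF_sub x y : nF F (x - y) = nF F x + nF F y - 2 * complex.Re (F x y).
Proof. by rewrite nF_add nF_opp FNr raddfN /=; ring. Qed.

Lemma nF_scale a x : nF F (a *: x) = (complex.Re a ^+ 2 + complex.Im a ^+ 2) * nF F x.
Proof.
rewrite /nF FZl FZr F_real /nF; case: a => p q /=; ring.
Qed.

Lemma nF_scaleR (r : R) x : nF F (r%:C *: x) = r ^+ 2 * nF F x.
Proof. by rewrite nF_scale /=; congr (_ * _); ring. Qed.

Lemma parallelogram x y : nF F (x + y) + nF F (x - y) = 2 * nF F x + 2 * nF F y.
Proof. rewrite nF_add nF_sub; ring. Qed.

Lemma ReF_i x y : complex.Re (F x ('i *: y)) = complex.Im (F x y).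
Proof. rewrite FZr; case: (F x y) => a b /=; ring. Qed.

End Herm.

Section Reals.
Variable R : realType.

Lemma small_eps (e : R) : 0 < e -> exists N : nat, forall n : nat, (N <= n)%N -> 1 / (n.+1)%:R < e.
Proof.
move=> e0; exists (Num.Def.archi_bound (e^-1)) => n hn.
have ei : 0 < e^-1 by rewrite invr_gt0.
have h1 := @archi_boundP _ (e^-1) (ltW ei).
have h2 : e^-1 < n.+1%:R.
  apply: (lt_le_trans h1); rewrite ler_nat; exact: (leq_trans hn (leqnSn n)).
have m0 : 0 < (n.+1)%:R :> R by rewrite ltr0n.
rewrite ltr_pdivrMr //.
have ee : e * e^-1 = 1 by rewrite mulfV // gt_eqF.
nra.
Qed.

Lemma le_of_eps (X d : R) : (forall eta, 0 < eta -> X <= d + eta) -> X <= d.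
Proof.
move=> h; rewrite leNgt; apply/negP => hlt.
have := h ((X - d) / 2); rewrite divr_gt0 ?subr_gt0 // => /(_ isT); lra.
Qed.

Lemma quad_disc (A b C : R) : (forall r : R, 0 <= A + r ^+ 2 * C + 2 * r * b) -> 0 <= C ->
  b ^+ 2 <= A * C.
Proof.
move=> H C0; have A0 : 0 <= A by have := H 0; rewrite expr0n /=; lra.
case: (ltgtP C 0) C0 => // [Cp|C00] _.
  have := H (- b / C); set r := - b / C => hr.
  have rC : r * C = - b by rewrite /r mulfVK // gt_eqF.
  nra.
case: (b =P 0) => [->|/eqP bn]; first by rewrite expr0n /= C00; lra.
have := H (- (A + 1) / (2 * b)); set r := - (A + 1) / (2 * b) => hr.
have rC : r * (2 * b) = - (A + 1) by rewrite /r mulfVK // mulf_neq0 // pnatr_eq0.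
rewrite C00 in hr *; nra.
Qed.

Lemma cs_bound (A b C : R) : 0 <= A -> 0 <= C -> b ^+ 2 <= A * C ->
  2 * b <= (A + 1) * Num.sqrt C.
Proof.
move=> A0 C0 h.
have sA := sqrtr_ge0 A; have sC := sqrtr_ge0 C.
have eA := sqr_sqrtr A0; have eC := sqr_sqrtr C0.
set s := Num.sqrt A in sA eA *; set t := Num.sqrt C in sC eC *.
rewrite -eA -eC in h *.
have hb : b <= s * t.
  rewrite leNgt; apply/negP => hl.
  have : (s * t) ^+ 2 < b ^+ 2.
    have st0 : 0 <= s * t by exact: mulr_ge0.
    move: (s * t) st0 hl => p p0 pb.
    have bp : 0 < b + p by lra.
    have bp' : 0 < b - p by lra.
    have := mulr_gt0 bp bp'; rewrite !expr2; nra.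
  rewrite exprMn; lra.
have := mulr_ge0 (sqr_ge0 (s - 1)) sC; nra.
Qed.

End Reals.

Section CS.
Variables (R : realType) (V : lmodType R[i]) (F : V -> V -> R[i]) (HF : herm F).

Lemma ReF_scaleR x y (r : R) : complex.Re (F x (r%:C *: y)) = r * complex.Re (F x y).
Proof. rewrite (FZr HF); case: (F x y) => a b /=; ring. Qed.

Lemma nF_addR x y (r : R) : nF F (x + r%:C *: y) =
   nF F x + r ^+ 2 * nF F y + 2 * r * complex.Re (F x y).
Proof. by rewrite (nF_add HF) (nF_scaleR HF) ReF_scaleR mulrA. Qed.

Lemma nF_subR x y (r : R) : nF F (x - r%:C *: y) =
   nF F x + r ^+ 2 * nF F y - 2 * r * complex.Re (F x y).
Proof. by rewrite (nF_sub HF) (nF_scaleR HF) ReF_scaleR mulrA. Qed.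

Lemma CS_Re x y : (forall r : R, 0 <= nF F (x + r%:C *: y)) -> 0 <= nF F y ->
  complex.Re (F x y) ^+ 2 <= nF F x * nF F y.
Proof.
move=> H C0; apply: quad_disc => // r; rewrite -nF_addR; exact: H.
Qed.

End CS.

Section PT.
Variables (R : realType) (V : lmodType R[i]) (F : V -> V -> R[i]) (HF : herm F).
Variables (S : V -> Prop) (x : V).
Hypothesis HS0 : S 0.
Hypothesis HSl : forall (a : R[i]) u v, S u -> S v -> S (a *: u + v).
Hypothesis Hpos : forall k (t : R[i]), S k -> 0 <= nF F (t *: x + k).
Hypothesis Hcomp : forall u : nat -> V, (forall n, S (u n)) ->
  (forall e : R, 0 < e -> exists N : nat, forall m n : nat, (N <= m)%N -> (N <= n)%N ->
      nF F (u m - u n) < e) ->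
  exists l, S l /\ forall e : R, 0 < e -> exists N : nat, forall n : nat, (N <= n)%N ->
      nF F (u n - l) < e.

Let SD u v : S u -> S v -> S (u + v).
Proof. by move=> hu hv; rewrite -[u]scale1r; apply: HSl. Qed.
Let SZ a u : S u -> S (a *: u).
Proof. by move=> hu; rewrite -[a *: u]addr0; apply: HSl. Qed.
Let SN u : S u -> S (- u).
Proof. by move=> hu; rewrite -scaleN1r; apply: SZ. Qed.
Let SB u v : S u -> S v -> S (u - v).
Proof. by move=> hu hv; apply: SD => //; apply: SN. Qed.

Let pos_xk k : S k -> 0 <= nF F (x - k).
Proof. by move=> hk; have := Hpos 1 (SN hk); rewrite scale1r. Qed.

Let pos_k k : S k -> 0 <= nF F k.
Proof. by move=> hk; have := Hpos 0 hk; rewrite scale0r add0r. Qed.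

Lemma projection_thm : exists l0, S l0 /\ forall z, S z -> F (x - l0) z = 0.
Proof.
pose E := fun r : R => exists k, S k /\ r = nF F (x - k).
have Ene : classical_sets.nonempty E by exists (nF F (x - 0)); exists 0.
have Elb : classical_sets.lbound E 0 by move=> r [k [hk ->]]; exact: pos_xk.
have Ehi : classical_sets.has_inf E by split => //; exists 0.
set d := inf E.
have d0 : 0 <= d by apply: lb_le_inf.
have dle k : S k -> d <= nF F (x - k).
  by move=> hk; apply: ge_inf; [exists 0 | exists k].
have adh : forall n : nat, exists k, S k /\ nF F (x - k) < d + 1 / (n.+1)%:R.
  move=> n; have : 0 < 1 / (n.+1)%:R :> R by rewrite divr_gt0 // ltr0n.
  move=> /inf_adherent /(_ Ehi) [r [k [hk ->]] hr]; by exists k.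
have [kk hkk] := boolp.choice adh.
have Skk n : S (kk n) by case: (hkk n).
have Akk n : nF F (x - kk n) < d + 1 / (n.+1)%:R by case: (hkk n).
have cau m n : nF F (kk m - kk n) <= 2 * (1 / (m.+1)%:R) + 2 * (1 / (n.+1)%:R).
  have par := parallelogram HF (x - kk m) (x - kk n).
  have e1 : x - kk m - (x - kk n) = - (kk m - kk n).
    by rewrite opprB addrC addrA subrK opprB.
  rewrite e1 (nF_opp HF) in par.
  pose mid := (2^-1 : R)%:C *: (kk m + kk n).
  have Smid : S mid by apply: SZ; apply: SD.
  have e2 : x - kk m + (x - kk n) = (2 : R)%:C *: (x - mid).
    have mm : mid + mid = kk m + kk n.
      rewrite /mid -mulr2n -scaler_nat scalerA -(rmorph_nat (real_complex R)) -rmorphM.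
      by rewrite mulfV ?pnatr_eq0 // rmorph1 scale1r.
    rewrite addrACA -opprD -mm opprD addrACA.
    by rewrite (rmorph_nat (real_complex R)) scaler_nat mulr2n.
  rewrite e2 (nF_scaleR HF) in par.
  have hp : nF F (kk m - kk n) = 2 * nF F (x - kk m) + 2 * nF F (x - kk n) - 2 * 2 * nF F (x - mid) by rewrite -par expr2; ring.
  rewrite hp; have := dle _ Smid; have := Akk m; have := Akk n.
  move: (nF F (x - kk m)) (nF F (x - kk n)) (nF F (x - mid)) (1 / m.+1%:R) (1 / n.+1%:R) => a1 a2 a3 q1 q2; lra.
have Cau : forall e : R, 0 < e -> exists N : nat, forall m n : nat, (N <= m)%N -> (N <= n)%N ->
      nF F (kk m - kk n) < e.
  move=> e e0; have [N hN] := small_eps (divr_gt0 e0 (ltr0n R 4)).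
  exists N => m n hm hn; have := hN _ hm; have := hN _ hn; have := cau m n.
  move: (1 / m.+1%:R) (1 / n.+1%:R) => q1 q2; lra.
have [l0 [Sl0 conv]] := Hcomp Skk Cau.
exists l0; split => //.
set X := nF F (x - l0).
have Xle : X <= d.
  apply: le_of_eps => eta eta0.
  have [N1 h1] := small_eps (ltr01 : (0 : R) < 1).
  have [N2 h2] := small_eps (divr_gt0 eta0 (ltr0n R 3)).
  have [N3 h3] := conv _ (divr_gt0 eta0 (ltr0n R 3)).
  set th := eta / (3 * (d + 2)).
  have th0 : 0 < th by rewrite /th divr_gt0 // mulr_gt0 //; lra.
  have [N4 h4] := conv _ (mulr_gt0 th0 th0).
  set n := (N1 + N2 + N3 + N4)%N.
  have := h1 n (leq_trans (leq_addr _ _) (leq_trans (leq_addr _ _) (leq_addr _ _))).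
  have := h2 n (leq_trans (leq_addl _ _) (leq_trans (leq_addr _ _) (leq_addr _ _))).
  have := h3 n (leq_trans (leq_addl _ _) (leq_addr _ _)).
  have := h4 n (leq_addl _ _).
  have := Akk n.
  move: (1 / (n.+1)%:R) => ep.
  set A := nF F (x - kk n); set C := nF F (kk n - l0).
  move=> hA hC4 hC3 hep2 hep1.
  have A0 : 0 <= A by apply: pos_xk.
  have C0 : 0 <= C by apply: pos_k; apply: SB.
  have eX : x - l0 = (x - kk n) + (kk n - l0) by rewrite addrA subrK.
  have HX : X = A + C + 2 * complex.Re (F (x - kk n) (kk n - l0)).
    by rewrite /X eX (nF_add HF).
  have hyp : forall r : R, 0 <= nF F (x - kk n + r%:C *: (kk n - l0)).
    move=> r.
    have -> : x - kk n + r%:C *: (kk n - l0) = 1 *: x + (r%:C *: (kk n - l0) - kk n).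
      by rewrite scale1r addrA addrAC.
    apply: Hpos; apply: SB; [apply: SZ; apply: SB | ] => //.
  have cb := cs_bound A0 C0 (CS_Re HF hyp C0).
  have sC : Num.sqrt C < th.
    have : Num.sqrt C < Num.sqrt (th ^+ 2) by rewrite ltr_sqrt ?exprn_gt0 // expr2.
    by rewrite sqrtr_sqr gtr0_norm.
  have sC0 := sqrtr_ge0 C.
  have thd : (d + 2) * th = eta / 3.
    have d2 : d + 2 != 0 by rewrite gt_eqF //; lra.
    by rewrite /th; field; rewrite d2.
  have Ae : A + 1 <= d + 2 by lra.
  have : (A + 1) * Num.sqrt C <= (d + 2) * th.
    apply: ler_pM => //; [lra | exact: ltW].
  rewrite thd HX; move: cb; rewrite -/A -/C.
  move: (complex.Re _) ((A + 1) * Num.sqrt C) => rr pp.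
  clear HX hC4 sC sC0 hyp; move: A C hA hC3 hep2 A0 C0 Ae => A' C' *; lra.
have foc z : S z -> complex.Re (F (x - l0) z) = 0.
  move=> hz; set b := complex.Re (F (x - l0) z); set Z := nF F z.
  have Z0 : 0 <= Z by apply: pos_k.
  have H r : 0 <= r ^+ 2 * Z - 2 * r * b.
    have := dle (l0 + r%:C *: z) (SD Sl0 (SZ _ hz)).
    by rewrite opprD addrA (nF_subR HF) -/X -/Z -/b; lra.
  have := H (b / (Z + 1)); set r := b / (Z + 1) => hr.
  have rZ : r * (Z + 1) = b by rewrite /r mulfVK // gt_eqF //; lra.
  have e : (Z + 1) ^+ 2 * (r ^+ 2 * Z - 2 * r * b) = b ^+ 2 * Z - 2 * b ^+ 2 * (Z + 1).
    by rewrite -rZ; ring.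
  have := mulr_ge0 (sqr_ge0 (Z + 1)) hr; rewrite e => hh.
  have : b ^+ 2 * (Z + 2) <= 0 by nra.
  have := sqr_ge0 b; move=> b2 h.
  have : b ^+ 2 = 0 by apply/eqP; rewrite eq_le b2 andbT; nra.
  by move/eqP; rewrite sqrf_eq0 => /eqP.
move=> z hz; have h1 := foc z hz.
have h2 := foc ('i *: z) (SZ _ hz); rewrite (ReF_i HF) in h2.
by move: h1 h2; case: (F (x - l0) z) => a b /= -> ->.
Qed.

End PT.

Lemma self_add0 (U : zmodType) (x : U) : x = x + x -> x = 0.
Proof. by move=> h; apply: (addrI x); rewrite -h addr0. Qed.

Lemma zm1 (U : zmodType) (a p z q : U) : a - p - (z - q) = (a - z) - (p - q).
Proof. by rewrite !opprB [q - z]addrC addrACA [- p + q]addrC. Qed.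

Section Span.
Variables (R : realType) (V : lmodType R[i]).

Definition in_span n (v : 'I_n -> V) x := exists a : 'I_n -> R[i], x = \sum_(i < n) a i *: v i.

Definition ocons (T : Type) n (e : T) (g : 'I_n -> T) : 'I_n.+1 -> T :=
  fun i => if unlift ord0 i is Some j then g j else e.

Lemma ocons0 T n (e : T) g : @ocons T n e g ord0 = e.
Proof. by rewrite /ocons unlift_none. Qed.

Lemma oconsS T n (e : T) g j : @ocons T n e g (lift ord0 j) = g j.
Proof. by rewrite /ocons liftK. Qed.

Lemma sum_ocons n (t : R[i]) (e : V) a v :
  \sum_(i < n.+1) ocons t a i *: ocons e v i = t *: e + \sum_(i < n) a i *: v i.
Proof.
rewrite big_ord_recl ocons0 ocons0; congr (_ + _); apply: eq_bigr => j _.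
by rewrite !oconsS.
Qed.

Lemma lin_sum (P : V -> V) (HP : forall a x y, P (a *: x + y) = a *: P x + P y) n a v :
  P (\sum_(i < n) a i *: v i) = \sum_(i < n) a i *: P (v i).
Proof.
have P0 : P 0 = 0.
  by have := HP 1 0 0; rewrite !scale1r addr0 => /self_add0.
apply: (big_rec2 (fun s t => P s = t)) => // i y1 y2 _ <-; exact: HP.
Qed.

Lemma fun_sum (g : V -> R[i]) (Hg : forall a x y, g (a *: x + y) = a * g x + g y) n a v :
  g (\sum_(i < n) a i *: v i) = \sum_(i < n) a i * g (v i).
Proof.
have g0 : g 0 = 0.
  by have := Hg 1 0 0; rewrite scale1r addr0 mul1r => /self_add0.
apply: (big_rec2 (fun s t => g s = t)) => // i y1 y2 _ <-; exact: Hg.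
Qed.

Lemma span0 n (v : 'I_n -> V) : in_span v 0.
Proof. by exists (fun _ => 0); rewrite big1 // => i _; rewrite scale0r. Qed.

Lemma subsp_D (W : V -> Prop) : is_subspace W -> forall x y, W x -> W y -> W (x + y).
Proof. by move=> [_ h] x y hx hy; rewrite -[x]scale1r; apply: h. Qed.
Lemma subsp_Z (W : V -> Prop) : is_subspace W -> forall a x, W x -> W (a *: x).
Proof. by move=> [h0 h] a x hx; rewrite -[a *: x]addr0; apply: h. Qed.
Lemma subsp_B (W : V -> Prop) : is_subspace W -> forall x y, W x -> W y -> W (x - y).
Proof.
move=> hW x y hx hy; apply: subsp_D => //; rewrite -scaleN1r; exact: subsp_Z.
Qed.

Lemma LA n : forall (W : V -> Prop) (f : 'I_n -> V -> R[i]), is_subspace W ->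
  (forall i a x y, f i (a *: x + y) = a * f i x + f i y) ->
  (forall x, W x -> (forall i, f i x = 0) -> x = 0) ->
  exists v : 'I_n -> V, forall x, W x -> in_span v x.
Proof.
elim: n => [|n IH] W f hW hf hinj.
  exists (fun _ => 0) => x hx; rewrite (hinj x hx); first exact: span0.
  by case.
have f0l a x y : f ord0 (a *: x + y) = a * f ord0 x + f ord0 y by apply: hf.
have f00 : f ord0 0 = 0.
  by have := f0l 1 0 0; rewrite scale1r addr0 mul1r => /self_add0.
have f0B x y : f ord0 (x - y) = f ord0 x - f ord0 y.
  by rewrite -scaleN1r addrC f0l mulN1r addrC.
case: (boolp.pselect (exists e, W e /\ f ord0 e != 0)) => [[e [We fe]]|none].
- pose W' := fun x => W x /\ f ord0 x = 0.
  have hW' : is_subspace W'.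
    rewrite /is_subspace /W'; split; first by split; [case: hW | exact: f00].
    by move=> a x y [hx fx] [hy fy]; split; [case: hW => _; apply | rewrite f0l fx fy mulr0 addr0].
  have inj' : forall x, W' x -> (forall j, f (lift ord0 j) x = 0) -> x = 0.
    move=> x [hx fx] hz; apply: hinj => // i.
    case: (unliftP ord0 i) => [j ->|->] //; exact: hz.
  have [v' hv'] := IH W' (fun j => f (lift ord0 j)) hW' (fun j => hf _) inj'.
  exists (ocons e v') => x hx.
  pose t := f ord0 x / f ord0 e.
  have : W' (x - t *: e).
    split; first by apply: subsp_B => //; apply: subsp_Z.
    by rewrite f0B -[t *: e]addr0 f0l f00 addr0 /t mulfVK // subrr.
  move=> /hv' [a' ha']; exists (ocons t a').
  by rewrite sum_ocons -ha' addrC subrK.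
- have inj' : forall x, W x -> (forall j, f (lift ord0 j) x = 0) -> x = 0.
    move=> x hx hz; apply: hinj => // i.
    case: (unliftP ord0 i) => [j ->|->]; first exact: hz.
    by apply/eqP; apply/negPn/negP => h; apply: none; exists x; split.
  have [v' hv'] := IH W (fun j => f (lift ord0 j)) hW (fun j => hf _) inj'.
  exists (ocons 0 v') => x hx.
  have [a' ha'] := hv' x hx; exists (ocons 0 a').
  by rewrite sum_ocons scale0r add0r.
Qed.

End Span.

Section Coer.
Variables (R : realType) (V : lmodType R[i]) (ip B : V -> V -> R[i]).
Hypotheses (Hip : herm ip) (HB : herm B).
Hypothesis ipos : forall x, 0 <= nF ip x.
Hypothesis ipdef : forall x, x != 0 -> 0 < nF ip x.

Definition coercive (W : V -> Prop) :=
  exists2 c : R, 0 < c & forall x, W x -> c * nF ip x <= nF B x.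

Lemma nF_add_le x y : nF ip (x + y) <= 2 * nF ip x + 2 * nF ip y.
Proof. have := parallelogram Hip x y; have := ipos (x - y); lra. Qed.

Lemma COMB (W K M : V -> Prop) :
  (forall x, W x -> exists k m, [/\ K k, M m & x = k + m]) ->
  (forall k m, K k -> M m -> B k m = 0) ->
  coercive K -> coercive M -> coercive W.
Proof.
move=> hdec horth [c1 c1p h1] [c2 c2p h2].
have [c [cp hc1 hc2]] : exists c : R, [/\ 0 < c, 2 * c <= c1 & 2 * c <= c2].
  by case: (lerP c1 c2) => h; [exists (c1 / 2) | exists (c2 / 2)]; split; lra.
exists c => // x /hdec [k [m [hk hm ->]]].
rewrite (nF_add HB) horth // /=.
have := nF_add_le k m; have := h1 _ hk; have := h2 _ hm.
have := ipos k; have := ipos m.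
move: (nF ip (k + m)) (nF ip k) (nF ip m) (nF B k) (nF B m) => X a b p q.
move=> b0 a0 hq hp hX.
have := ler_wpM2l (ltW cp) hX.
have d1 : 0 <= c1 - 2 * c by lra.
have d2 : 0 <= c2 - 2 * c by lra.
have := mulr_ge0 d1 a0; have := mulr_ge0 d2 b0.
nra.
Qed.


Lemma FD n : forall (W : V -> Prop) (v : 'I_n -> V), is_subspace W ->
  (forall x, W x -> x != 0 -> 0 < nF B x) ->
  (forall x, W x -> in_span v x) -> coercive W.
Proof.
elim: n => [|n IH] W v hW Wpos hspan.
  exists 1 => // x /hspan [a ->]; rewrite big_ord0 (nF0 Hip) (nF0 HB); lra.
pose v' := fun j : 'I_n => v (lift ord0 j).
case: (boolp.pselect (forall x, W x -> in_span v' x)) => [all|nall].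
  exact: (IH W v' hW Wpos all).
have [e [We ne]] : exists e, W e /\ ~ in_span v' e.
  apply: boolp.contrapT => h; apply: nall => x hx; apply: boolp.contrapT => hn.
  by apply: h; exists x.
have e0 : e != 0 by apply/eqP => e0; apply: ne; rewrite e0; exact: span0.
have qe := Wpos _ We e0; have Ne := ipdef e0.
have Bee : B e e != 0.
  by rewrite (F_real HB); apply/eqP => /(congr1 (@complex.Re R)) /= h; move: qe; rewrite h ltxx.
pose P := fun x => x - (B x e / B e e) *: e.
have Plin a x y : P (a *: x + y) = a *: P x + P y.
  rewrite /P HB.1 mulrDl scalerDl -mulrA -scalerA scalerBr opprD addrACA //.
have Pe : P e = 0 by rewrite /P mulfV // scale1r subrr.
have BPe x : B (P x) e = 0 by rewrite /P (FBl HB) (FZl HB) mulfVK // subrr.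
have Pm x : B x e = 0 -> P x = x by move=> h; rewrite /P h mul0r scale0r subr0.
pose M := fun x => W x /\ B x e = 0.
have hM : is_subspace M.
  split; first by split; [case: hW | exact: (F0l HB)].
  move=> a x y [hx bx] [hy by']; split; first by case: hW => _; apply.
  by rewrite HB.1 bx by' mulr0 addr0.
pose u := fun j : 'I_n => P (v' j).
have Mspan : forall m, M m -> in_span u m.
  move=> m [Wm Bm].
  have [a ha] := hspan m Wm; have [b hb] := hspan e We.
  rewrite big_ord_recl in ha; rewrite big_ord_recl in hb.
  have b0 : b ord0 != 0.
    apply/eqP => b0; apply: ne; exists (fun j => b (lift ord0 j)).
    by rewrite hb b0 scale0r add0r.
  pose t := a ord0 / b ord0.
  have PE : P e = b ord0 *: P (v ord0) + \sum_(j < n) b (lift ord0 j) *: u j.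
    by rewrite {1}hb Plin (lin_sum Plin).
  have PM : P m = a ord0 *: P (v ord0) + \sum_(j < n) a (lift ord0 j) *: u j.
    by rewrite {1}ha Plin (lin_sum Plin).
  exists (fun j => a (lift ord0 j) - t * b (lift ord0 j)).
  have -> : \sum_(j < n) (a (lift ord0 j) - t * b (lift ord0 j)) *: u j =
     \sum_(j < n) a (lift ord0 j) *: u j - t *: \sum_(j < n) b (lift ord0 j) *: u j.
    rewrite scaler_sumr -sumrB; apply: eq_bigr => j _; by rewrite scalerBl scalerA.
  have ta : a ord0 = t * b ord0 by rewrite /t mulfVK.
  rewrite -(Pm m Bm) PM ta -scalerA.
  have -> : b ord0 *: P (v ord0) = - \sum_(j < n) b (lift ord0 j) *: u j.
    by apply/eqP; rewrite -subr_eq0 opprK -PE Pe.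
  by rewrite scalerN addrC.
have [c2 c2p h2] := IH M u hM (fun x hx => Wpos x hx.1) Mspan.
pose K := fun y => exists t, y = t *: e.
have cK : coercive K.
  exists (nF B e / nF ip e); first by rewrite divr_gt0.
  move=> y [t ->]; rewrite (nF_scale Hip) (nF_scale HB).
  set s := (complex.Re t ^+ 2 + complex.Im t ^+ 2).
  have Nn : nF ip e != 0 by rewrite gt_eqF.
  have -> : nF B e / nF ip e * (s * nF ip e) = s * nF B e by field.
  by [].
apply: (COMB (K := K) (M := M)) => //; last by exists c2.
  move=> x hx; exists ((B x e / B e e) *: e), (P x); split => //.
  - by exists (B x e / B e e).
  - split; last exact: BPe.
    by apply: subsp_B => //; apply: subsp_Z.
  - by rewrite /P addrC subrK.
move=> k m [t ->] [_ hm]; by rewrite (FZl HB) HB.2 hm rmorph0 mulr0.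
Qed.
End Coer.

Lemma lt_sqrt_iff (R : realType) (a d : R) : 0 < d -> (Num.sqrt a < d) = (a < d ^+ 2).
Proof. by move=> d0; rewrite -{1}(gtr0_norm d0) -sqrtr_sqr ltr_sqrt // exprn_gt0. Qed.

Definition csq (R : realType) (w : R[i]) := complex.Re w ^+ 2 + complex.Im w ^+ 2.

Lemma csq_ge0 (R : realType) (w : R[i]) : 0 <= csq w.
Proof. by rewrite /csq addr_ge0 // sqr_ge0. Qed.

Lemma cabs_lt (R : realType) (w : R[i]) (e : R) : 0 < e -> (cabs w < e) = (csq w < e ^+ 2).
Proof. by move=> e0; rewrite /cabs lt_sqrt_iff. Qed.

Lemma csqM (R : realType) (w c : R[i]) : csq (w * c) = csq w * csq c.
Proof. by case: w => a b; case: c => p q; rewrite /csq /=; ring. Qed.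

Lemma csq_eq0 (R : realType) (w : R[i]) : csq w = 0 -> w = 0.
Proof.
case: w => a b; rewrite /csq /= => h.
have ha := sqr_ge0 a; have hb := sqr_ge0 b.
have a0 : a ^+ 2 = 0 by lra.
have b0 : b ^+ 2 = 0 by lra.
by move/eqP: a0; move/eqP: b0; rewrite !sqrf_eq0 => /eqP -> /eqP ->.
Qed.

Section Main.
Variables (R : realType) (V : lmodType R[i]) (ip s : V -> V -> R[i]).
Hypothesis Hhil : is_hilbert ip.
Hypothesis Hs : strong_symplectic ip s.

Definition Bf := fun x y : V => - (iC * s x y).

Lemma Hip : herm ip.
Proof. by case: Hhil => -[h1 h2 _] _ _; split. Qed.

Lemma HB : herm Bf.
Proof.
case: Hs => -[l1 l2] sk _ _ _; split.
  by move=> a x y z; rewrite /Bf l1; ring.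
move=> x y; rewrite /Bf sk; case: (s x y) => a b /=; rewrite /iC /=.
by apply/eqP; rewrite eq_complex /=; apply/andP; split; apply/eqP; ring.
Qed.

Lemma ipdef x : x != 0 -> 0 < nF ip x.
Proof.
case: Hhil => -[_ _ h3] _ _ /h3; rewrite ltcE /= => /andP [_]; done.
Qed.

Lemma ipos x : 0 <= nF ip x.
Proof.
case: (x =P 0) => [->|/eqP h]; first by rewrite (nF0 Hip).
exact: ltW (ipdef h).
Qed.

Lemma Bx_real x : - (iC * s x x) = (nF Bf x)%:C.
Proof. exact: (F_real HB x). Qed.

Lemma pos_defE (L : V -> Prop) : pos_def s L <-> (forall x, L x -> x != 0 -> 0 < nF Bf x).
Proof.
by split=> h x hx hn; have := h x hx hn; rewrite ?Bx_real ltcE /= eqxx.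
Qed.

Lemma hnorm_sq x : hnorm ip x ^+ 2 = nF ip x.
Proof. by rewrite /hnorm sqr_sqrtr // ipos. Qed.

Lemma hnorm_lt x d : 0 < d -> (hnorm ip x < d) = (nF ip x < d ^+ 2).
Proof. by move=> d0; rewrite /hnorm lt_sqrt_iff. Qed.

Lemma hconvE u l : hconverges ip u l <->
  (forall e : R, 0 < e -> exists N : nat, forall n, (N <= n)%N -> nF ip (u n - l) < e).
Proof.
split=> h e e0.
  have se : 0 < Num.sqrt e by rewrite sqrtr_gt0.
  have [N hN] := h (Num.sqrt e) se.
  by exists N => n /hN; rewrite hnorm_lt ?sqrtr_gt0 // sqr_sqrtr // ltW.
have [N hN] := h (e ^+ 2) (exprn_gt0 _ e0).
by exists N => n /hN; rewrite hnorm_lt.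
Qed.

Lemma hcauchyE u : hcauchy ip u <->
  (forall e : R, 0 < e -> exists N : nat, forall m n, (N <= m)%N -> (N <= n)%N -> nF ip (u m - u n) < e).
Proof.
split=> h e e0.
  have se : 0 < Num.sqrt e by rewrite sqrtr_gt0.
  have [N hN] := h (Num.sqrt e) se.
  by exists N => m n hm hn; move: (hN m n hm hn); rewrite hnorm_lt ?sqrtr_gt0 // sqr_sqrtr // ltW.
have [N hN] := h (e ^+ 2) (exprn_gt0 _ e0).
by exists N => m n hm hn; move: (hN m n hm hn); rewrite hnorm_lt.
Qed.

Lemma s_seq_cont u l y : hconverges ip u l ->
  forall e : R, 0 < e -> exists N : nat, forall n, (N <= n)%N -> csq (s (u n) y - s l y) < e.
Proof.
move=> hc e e0; case: Hs => _ _ hcont _ _.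
have se : 0 < Num.sqrt e by rewrite sqrtr_gt0.
have [d d0 hd] := hcont l y (Num.sqrt e) se.
have [N hN] := hc d d0.
exists N => n hn; have := hd (u n) y (hN n hn).
rewrite subrr /hnorm -[complex.Re (ip 0 0)]/(nF ip 0) (nF0 Hip) sqrtr0 => /(_ d0).
by rewrite cabs_lt ?sqrtr_gt0 // sqr_sqrtr // ltW.
Qed.


Lemma s_lin1 a x y z : s (a *: x + y) z = a * s x z + s y z.
Proof. by case: Hs => -[l1 _] _ _ _ _; apply: l1. Qed.

Lemma s_skew x y : s y x = - Num.conj (s x y).
Proof. by case: Hs => _ sk _ _ _; apply: sk. Qed.

Lemma s_add x y z : s (x + y) z = s x z + s y z.
Proof. by rewrite -[x]scale1r s_lin1 mul1r scale1r. Qed.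

Lemma s_scale a x z : s (a *: x) z = a * s x z.
Proof.
have s0 : s 0 z = 0.
  by have := s_lin1 1 0 0 z; rewrite scale1r addr0 mul1r => /self_add0.
by rewrite -[a *: x]addr0 s_lin1 s0 addr0.
Qed.

Lemma s_span0 x n (v : 'I_n -> V) : (forall i, s x (v i) = 0) -> forall z, in_span v z -> s x z = 0.
Proof.
move=> h z [a ->].
pose g := fun z => Num.conj (s x z).
have hg : forall a x y, g (a *: x + y) = a * g x + g y.
  move=> b p q; rewrite /g.
  case: Hs => -[_ l2] _ _ _ _; rewrite l2 rmorphD rmorphM /=.
  by rewrite conjCK.
have := fun_sum hg a v; rewrite /g.
have hz : \sum_(i < n) a i * Num.conj (s x (v i)) = 0.
  by rewrite big1 // => i _; rewrite h conjC0 mulr0.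
by rewrite hz => /eqP; rewrite conjC_eq0 => /eqP.
Qed.

Lemma nF_add_le' x y : nF ip (x - y) <= 2 * nF ip x + 2 * nF ip y.
Proof. by have := nF_add_le Hip ipos x (- y); rewrite (nF_opp Hip). Qed.

Lemma NP (L : V -> Prop) : max_pos_def ip s L -> forall y, sperp s L y -> nF Bf y <= 0.
Proof.
move=> [[hsub hclo] hpos hmax] y hy; rewrite leNgt; apply/negP => qy.
have hposE := (pos_defE L).1 hpos.
have sl l : L l -> s l y = 0 by move=> hl; rewrite s_skew hy // conjC0 oppr0.
have syy : s y y != 0.
  apply/eqP => h; move: qy; rewrite /nF /Bf h mulr0 oppr0 /= ltxx //.
pose L' := fun x => exists l t, L l /\ x = l + t *: y.
have L'sub : is_subspace L'.
  split; first by exists 0, 0; split; [case: hsub | rewrite scale0r addr0].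
  move=> a x1 x2 [l1 [t1 [h1 ->]]] [l2 [t2 [h2 ->]]].
  exists (a *: l1 + l2), (a * t1 + t2); split; first by case: hsub => _; apply.
  by rewrite scalerDr scalerA scalerDl addrACA.
have L'pos : forall x, L' x -> x != 0 -> 0 < nF Bf x.
  move=> x [l [t [hl ->]]] hx.
  rewrite (nF_add HB) (FZr HB) /Bf sl // mulr0 oppr0 mulr0 /= mulr0 addr0.
  rewrite (nF_scale HB) -/(csq t).
  have lpos : 0 <= nF Bf l.
    case: (l =P 0) => [->|/eqP ln]; first by rewrite (nF0 HB).
    exact: ltW (hposE l hl ln).
  case: (t =P 0) => [t0|/eqP tn].
    move: hx; rewrite t0 scale0r addr0 => ln.
    rewrite /csq /= expr0n /= addr0 mul0r addr0; exact: hposE.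
  have ct : 0 < csq t.
    rewrite lt_neqAle csq_ge0 andbT eq_sym; apply/eqP => /csq_eq0 h0.
    by move/eqP: tn.
  have := mulr_gt0 ct qy.
  change (0 < csq t * nF Bf y -> 0 < nF Bf l + csq t * nF Bf y); lra.
have L'clo : forall (u : nat -> V) (l : V), (forall n, L' (u n)) -> hconverges ip u l -> L' l.
  move=> u z hu hc.
  pose tn := fun n => s (u n) y / s y y.
  have Ln n : L (u n - tn n *: y).
    have [l [t [hl eu]]] := hu n.
    have : tn n = t by rewrite /tn eu s_add s_scale sl // add0r mulfK.
    by move=> ->; rewrite eu addrK.
  pose tt := s z y / s y y.
  have Lz : L (z - tt *: y).
    apply: (hclo (fun n => u n - tn n *: y)) => //.
    apply/hconvE => e e0.
    pose K := csq ((s y y)^-1) * nF ip y.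
    have K0 : 0 <= K by apply: mulr_ge0; [exact: csq_ge0 | exact: ipos].
    have [N1 h1] := (hconvE u z).1 hc (e / 4) (divr_gt0 e0 (ltr0n _ 4)).
    have D0 : 0 < e / (4 * (K + 1)) by apply: divr_gt0 => //; apply: mulr_gt0 => //; lra.
    have [N2 h2] := s_seq_cont y hc D0.
    exists (N1 + N2)%N => n hn.
    have hn1 : (N1 <= n)%N by apply: leq_trans hn; apply: leq_addr.
    have hn2 : (N2 <= n)%N by apply: leq_trans hn; apply: leq_addl.
    have -> : u n - tn n *: y - (z - tt *: y) = (u n - z) - (tn n - tt) *: y.
      by rewrite scalerBl zm1.
    have eq1 : nF ip ((tn n - tt) *: y) = csq (s (u n) y - s z y) * K.
      rewrite (nF_scale Hip) -/(csq _) /tn /tt -mulrBl csqM /K; ring.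
    have hsum := nF_add_le' (u n - z) ((tn n - tt) *: y).
    rewrite eq1 in hsum.
    have hA := h1 n hn1; have hC := h2 n hn2.
    set D := e / (4 * (K + 1)) in hC D0.
    have DK : D * (4 * (K + 1)) = e.
      by rewrite /D mulfVK // gt_eqF //; apply: mulr_gt0 => //; lra.
    have cK := ler_wpM2r K0 (ltW hC).
    have DK' : D * K <= e / 4.
      have : D * K <= D * (K + 1) by apply: ler_wpM2l; [exact: ltW | lra].
      have : D * (K + 1) = e / 4 by rewrite -DK; field.
      lra.
    lra.
  by exists (z - tt *: y), tt; split => //; rewrite subrK.
have := hmax L' (conj L'sub L'clo) ((pos_defE L').2 L'pos).
have LL' : forall x, L x -> L' x by move=> x hx; exists x, 0; split => //; rewrite scale0r addr0.
move=> /(_ LL' y) Ly.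
have : L y.
  by apply: Ly; exists 0, 1; split; [case: hsub | rewrite scale1r add0r].
by move=> /hy h; move/eqP: syy.
Qed.

Lemma ip_cont uu : hcontinuous_fun ip (fun z => ip z uu).
Proof.
move=> x0 e e0.
set Nu := nF ip uu; have Nu0 : 0 <= Nu := ipos uu.
set K := 2 * Nu + 1; have K1 : 1 <= K by rewrite /K; lra.
have K0 : 0 < K by lra.
exists (e / K); first by rewrite divr_gt0.
move=> y; rewrite hnorm_lt ?divr_gt0 // => hy.
rewrite -(FBl Hip) cabs_lt //.
set w := y - x0 in hy *.
have hw := ipos w.
have h1 : complex.Re (ip w uu) ^+ 2 <= nF ip w * Nu.
  by apply: (CS_Re Hip) => [r|]; [exact: ipos | exact: Nu0].
have h2 : complex.Im (ip w uu) ^+ 2 <= nF ip w * Nu.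
  rewrite -(ReF_i Hip).
  have -> : Nu = nF ip ('i *: uu) by rewrite (nF_scale Hip) /=; rewrite /Nu; ring.
  by apply: (CS_Re Hip) => [r|]; exact: ipos.
rewrite /csq.
have [d [d0 eK hy']] : exists d, [/\ 0 < d, e = d * K & nF ip w < d ^+ 2].
  exists (e / K); split => //; [by rewrite divr_gt0 | by rewrite mulfVK // gt_eqF].
clear hy; rewrite eK exprMn.
have hA : nF ip w * Nu <= d ^+ 2 * Nu by apply: ler_wpM2r => //; exact: ltW.
have d2 : 0 < d ^+ 2 by exact: exprn_gt0.
have hB : d ^+ 2 * K <= d ^+ 2 * K ^+ 2.
  apply: ler_wpM2l; first exact: ltW.
  by rewrite expr2 ler_peMr //; lra.
have hK : d ^+ 2 * K = 2 * (d ^+ 2 * Nu) + d ^+ 2 by rewrite /K; ring.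
clearbody K Nu w; clear eK.
lra.
Qed.

Lemma Im_le_cabs (z : R[i]) : complex.Im z <= cabs z.
Proof.
rewrite /cabs; apply: (le_trans (ler_norm _)).
rewrite -sqrtr_sqr ler_sqrt; last by rewrite addr_ge0 ?sqr_ge0.
by rewrite lerDr sqr_ge0.
Qed.

Lemma nFB_Im w : nF Bf w = complex.Im (s w w).
Proof. by rewrite /nF /Bf /iC; case: (s w w) => a b /=; ring. Qed.

Lemma csqN (z : R[i]) : csq (- z) = csq z.
Proof. by case: z => a b; rewrite /csq /=; ring. Qed.

Lemma caseA L W : max_compl_pos_def ip s L -> finite_dim L -> max_pos_def ip s W ->
  coercive ip Bf W.
Proof.
move=> [hL _] [n [v hv]] hW.
have [[hWsub hWclo] hWpos _] := hW.
have hWposE := (pos_defE W).1 hWpos.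
have inj : forall x, W x -> (forall i, s x (v i) = 0) -> x = 0.
  move=> x hx hz.
  have sp : sperp s L x by move=> z hz'; apply: (s_span0 hz); apply: hv.
  have := NP hL sp; case: (x =P 0) => // /eqP xn.
  by move=> h; have := hWposE x hx xn; rewrite ltNge h.
have [vW hvW] := LA (f := fun i x => s x (v i)) hWsub (fun i a x y => s_lin1 a x y (v i)) inj.
exact: (FD Hip HB ipos ipdef hWsub hWposE hvW).
Qed.


Lemma s_conjlin2 a x y z : s z (a *: x + y) = Num.conj a * s z x + s z y.
Proof. by case: Hs => -[_ l2] _ _ _ _; apply: l2. Qed.

Lemma coerc_of_mcpd L : max_compl_pos_def ip s L ->
  exists2 c : R, 0 < c & forall x, L x -> c * nF ip x <= nF Bf x.
Proof.
move=> [_ [c c0 hc]]; exists c => // x /hc.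
by rewrite hnorm_sq Bx_real /RtoC lecE /= => /andP [_].
Qed.

Lemma caseB L W : max_compl_pos_def ip s L -> finite_dim (sperp s L) -> max_pos_def ip s W ->
  coercive ip Bf W.
Proof.
move=> hLc [m [v hv]] hW.
have [cL cL0 hcL] := coerc_of_mcpd hLc.
have [[[hLsub hLclo] hLpos _] _] := hLc.
have [[hWsub hWclo] hWpos _] := hW.
have hWposE := (pos_defE W).1 hWpos.
have Li : forall x, (forall i, s x (v i) = 0) -> L x.
  move=> x hx; apply: boolp.contrapT => nLx.
  have Hcomp : forall u : nat -> V, (forall n, L (u n)) ->
    (forall e : R, 0 < e -> exists N : nat, forall m n : nat, (N <= m)%N -> (N <= n)%N ->
      nF ip (u m - u n) < e) ->
    exists l, L l /\ forall e : R, 0 < e -> exists N : nat, forall n : nat, (N <= n)%N ->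
      nF ip (u n - l) < e.
    move=> u hu hcau; case: Hhil => _ hcomp _.
    have [l hl] := hcomp u ((hcauchyE u).2 hcau).
    exists l; split; [exact: (hLclo u l hu hl) | exact: (hconvE u l).1 hl].
  have [l0 [Ll0 horth]] := projection_thm Hip (x := x) hLsub.1 hLsub.2
      (fun k t _ => ipos _) Hcomp.
  set uu := x - l0 in horth.
  have uun : uu != 0.
    by apply/eqP => /eqP; rewrite subr_eq0 => /eqP ex; apply: nLx; rewrite ex.
  have [y hy] : exists y, forall z, ip z uu = s z y.
    case: Hs => _ _ _ _ riesz; apply: riesz; last exact: ip_cont.
    by move=> a p q; rewrite Hip.1.
  have spy : sperp s L y.
    move=> l hl; rewrite s_skew -hy Hip.2 conjCK.
    by rewrite (horth l hl) oppr0.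
  have sxy : s x y = 0 := s_span0 hx (hv y spy).
  have : ip x uu = 0 by rewrite hy.
  have -> : x = uu + l0 by rewrite /uu subrK.
  rewrite (FDl Hip) [ip l0 uu]Hip.2 (horth l0 Ll0) conjC0 addr0 => h0.
  have := ipdef uun; rewrite /nF h0 /= ltxx //.
pose K := fun x => W x /\ (forall i, s x (v i) = 0).
have hKsub : is_subspace K.
  split; first by split; [case: hWsub | move=> i; rewrite -(scale0r (0 : V)) s_scale mul0r].
  move=> a p q [hp sp] [hq sq]; split; first by case: hWsub => _; apply.
  by move=> i; rewrite s_lin1 sp sq mulr0 addr0.
have KL x : K x -> L x by move=> hx; exact: Li hx.2.
have cK : coercive ip Bf K by exists cL => // x hx; apply: hcL; apply: KL.
have s0 z : s 0 z = 0 by rewrite -(scale0r (0 : V)) s_scale mul0r.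
have dec : forall w, W w -> exists k0, K k0 /\ forall z, K z -> Bf (w - k0) z = 0.
  move=> w hw.
  have Hpos : forall k (t : R[i]), K k -> 0 <= nF Bf (t *: w + k).
    move=> k t hk; have hp : W (t *: w + k) by case: hWsub => _; apply => //; exact: hk.1.
    case: (t *: w + k =P 0) => [->|/eqP pn]; first by rewrite (nF0 HB).
    exact: ltW (hWposE _ hp pn).
  have Hcomp : forall u : nat -> V, (forall n, K (u n)) ->
    (forall e : R, 0 < e -> exists N : nat, forall m n : nat, (N <= m)%N -> (N <= n)%N ->
      nF Bf (u m - u n) < e) ->
    exists l, K l /\ forall e : R, 0 < e -> exists N : nat, forall n : nat, (N <= n)%N ->
      nF Bf (u n - l) < e.
    move=> u hu hcau.
    have hcau' : hcauchy ip u.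
      apply/hcauchyE => e e0.
      have [N hN] := hcau (e * cL) (mulr_gt0 e0 cL0).
      exists N => p q hp hq; have := hN p q hp hq.
      have := hcL _ (KL _ (subsp_B hKsub (hu p) (hu q))).
      move: (nF ip _) (nF Bf _) => a b h1 h2.
      rewrite ltNge; apply/negP => h3.
      have := ler_wpM2l (ltW cL0) h3; nra.
    case: Hhil => _ hcomp _.
    have [l hl] := hcomp u hcau'.
    have Wl : W l by apply: (hWclo u l) => // n; exact: (hu n).1.
    exists l; split.
      split => // i.
      have h := s_seq_cont (v i) hl.
      have hc : csq (s l (v i)) <= 0.
        apply: le_of_eps => eta eta0; rewrite add0r.
        have [N hN] := h eta eta0; have := hN N (leqnn N).
        by rewrite (hu N).2 sub0r csqN => /ltW.
      have : csq (s l (v i)) = 0 by apply/eqP; rewrite eq_le hc csq_ge0.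
      exact: csq_eq0.
    move=> e e0; case: Hs => _ _ hcont _ _.
    have [d d0 hd] := hcont 0 0 e e0.
    have [N hN] := (hconvE u l).1 hl (d ^+ 2) (exprn_gt0 _ d0).
    exists N => n hn.
    have hn' : hnorm ip (u n - l - 0) < d by rewrite subr0 hnorm_lt //; exact: hN.
    have := hd _ _ hn' hn'; rewrite s0 subr0 => hlt.
    rewrite nFB_Im; exact: le_lt_trans (Im_le_cabs _) hlt.
  exact: (projection_thm HB (x := w) hKsub.1 hKsub.2 Hpos Hcomp).
pose M := fun p => W p /\ forall z, K z -> Bf p z = 0.
have hMsub : is_subspace M.
  split; first by split; [case: hWsub | move=> z _; exact: (F0l HB)].
  move=> a p q [hp bp] [hq bq]; split; first by case: hWsub => _; apply.
  by move=> z hz; rewrite HB.1 bp // bq // mulr0 addr0.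
have Mpos : forall x, M x -> x != 0 -> 0 < nF Bf x by move=> x hx; exact: hWposE x hx.1.
have injM : forall x, M x -> (forall i, s x (v i) = 0) -> x = 0.
  move=> x [hx bx] hz; have Kx : K x by split.
  have := bx x Kx; case: (x =P 0) => // /eqP xn h.
  by have := Mpos x (conj hx bx) xn; rewrite /nF h /= ltxx.
have [vM hvM] := LA (f := fun i x => s x (v i)) hMsub (fun i a x y => s_lin1 a x y (v i)) injM.
have cM := FD Hip HB ipos ipdef hMsub Mpos hvM.
apply: (COMB Hip HB ipos (K := K) (M := M)) => //.
  move=> w hw; have [k0 [Kk0 hk0]] := dec w hw.
  exists k0, (w - k0); split => //; last by rewrite addrC subrK.
  by split; [exact: (subsp_B hWsub hw Kk0.1) | exact: hk0].
move=> k p hk [_ hp]; by rewrite HB.2 hp // conjC0.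
Qed.

End Main.

Theorem proposition2p12 (R : realType) (V : lmodType R[i])
  (ip : V -> V -> R[i]) (s : V -> V -> R[i]) (W : V -> Prop) :
  is_hilbert ip -> strong_symplectic ip s ->
  (exists L : V -> Prop, max_compl_pos_def ip s L /\
     (finite_dim L \/ finite_dim (sperp s L))) ->
  max_pos_def ip s W ->
  max_compl_pos_def ip s W.
Proof.
move=> Hhil Hs [L [hL hfin]] hW; split => //.
have [c c0 hc] : coercive ip (Bf s) W.
  case: hfin => hfin; [exact: caseA hL hfin hW | exact: caseB hL hfin hW].
exists c => // x hx.
by rewrite (hnorm_sq Hhil) (Bx_real Hs) /RtoC lecE /= eqxx /=; apply: hc.
Qed.
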